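(* Work in Minkowski space $\mathbb{R}^{3,1}$ with metric $\eta=\operatorname{diag}(-1,1,1,1)$, indices lowered with $\eta$. For a nonzero 4-vector $k$, let $S_k$ be the set of symmetric tensors $$T_{\mu\nu}=u_\mu u_\nu+(u^\lambda u_\lambda)\,d_\mu d_\nu$$ where $u=(1,\vec v)$ with $|\vec v|\le1$, $d=(0,\hat d)$ with $|\hat d|=1$ and $\hat d\cdot\vec v=0$, and $u^\mu k_\mu=d^\mu k_\mu=0$. Then: (i) every $T\in S_k$ satisfies $k^\mu T_{\mu\nu}=0$; (ii) if $k$ is timelike, $S_k=\emptyset$; (iii) if $k$ is spacelike, the real linear span of $S_k$ equals the space of all symmetric tensors $T_{\mu\nu}$ with $k^\mu T_{\mu\nu}=0$; (iv) if $k$ is null, the real linear span of $S_k$ is the one-dimensional space $\mathbb{R}\,k_\mu k_\nu$; in particular for every null $l$, $l^\mu T_{\mu\nu}$ is non-spacelike for every $T$ in this span. *)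

(* Defs.v *)
(* vectors are row vectors 'rV[R]_4 of contravariant
   components x^mu (index 0 = time), R a real closed field. *)
From HB Require Import structures.
From mathcomp Require Import all_boot all_order all_algebra.
Set Implicit Arguments. Unset Strict Implicit. Unset Printing Implicit Defensive.
Import Order.TTheory GRing.Theory Num.Theory.
Local Open Scope ring_scope.

Section Mink.
Variable R : rcfType.

Definition eta (i : 'I_4) : R := if i == ord0 then -1 else 1.

Definition mink (x y : 'rV[R]_4) : R := \sum_(i < 4) eta i * x ord0 i * y ord0 i.

Definition sdot (x y : 'rV[R]_4) : R :=
  \sum_(i < 4 | i != ord0) x ord0 i * y ord0 i.

Definition lower (x : 'rV[R]_4) : 'rV[R]_4 := \row_i (eta i * x ord0 i).

Definition tensorT (u d : 'rV[R]_4) : 'M[R]_4 :=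
  (lower u)^T *m lower u + mink u u *: ((lower d)^T *m lower d).

Definition inSk (k : 'rV[R]_4) (T : 'M[R]_4) : Prop :=
  exists u d : 'rV[R]_4,
    [/\ u ord0 ord0 = 1, sdot u u <= 1,
        d ord0 ord0 = 0, sdot d d = 1 & sdot d u = 0] /\
    [/\ mink u k = 0, mink d k = 0 & T = tensorT u d].

(* contraction k^mu T_{mu nu}, a row vector of covariant components *)
Definition contr (k : 'rV[R]_4) (T : 'M[R]_4) : 'rV[R]_4 := k *m T.

Definition in_span (S : 'M[R]_4 -> Prop) (T : 'M[R]_4) : Prop :=
  exists (n : nat) (c : 'I_n -> R) (A : 'I_n -> 'M[R]_4),
    (forall i, S (A i)) /\ T = \sum_(i < n) c i *: A i.

Definition timelike (k : 'rV[R]_4) := mink k k < 0.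
Definition spacelike (k : 'rV[R]_4) := 0 < mink k k.
Definition null (k : 'rV[R]_4) := k != 0 /\ mink k k = 0.

End Mink.

(* Main.v *)
Require Import Defs.
From HB Require Import structures.
From mathcomp Require Import all_boot all_order all_algebra.
From mathcomp Require Import ring lra.
Set Implicit Arguments. Unset Strict Implicit. Unset Printing Implicit Defensive.
Import Order.TTheory GRing.Theory Num.Theory.
Local Open Scope ring_scope.

Section S0.
Variable R : rcfType.
Implicit Types (x y u d k p q : 'rV[R]_4) (S : 'M[R]_4 -> Prop) (A B : 'M[R]_4).
Local Notation eta := (Defs.eta R).
Definition i1 : 'I_4 := @Ordinal 4 1 isT.
Definition i2 : 'I_4 := @Ordinal 4 2 isT.
Definition i3 : 'I_4 := @Ordinal 4 3 isT.

Lemma sum4 (F : 'I_4 -> R) : \sum_(i < 4) F i = F ord0 + F i1 + F i2 + F i3.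
Proof.
rewrite !big_ord_recr big_ord0 /= add0r.
by congr (_ + _ + _ + _); congr F; apply: val_inj.
Qed.

Lemma sum4' (F : 'I_4 -> R) : \sum_(i < 4 | i != ord0) F i = F i1 + F i2 + F i3.
Proof. by rewrite big_mkcond sum4 /= add0r. Qed.

Lemma rowv4 x y : x ord0 ord0 = y ord0 ord0 -> x ord0 i1 = y ord0 i1 ->
  x ord0 i2 = y ord0 i2 -> x ord0 i3 = y ord0 i3 -> x = y.
Proof.
move=> h0 h1 h2 h3; apply/rowP => -[[|[|[|[|m]]]] Hm] //.
- by rewrite (_ : Ordinal Hm = ord0) //; apply: val_inj.
- by rewrite (_ : Ordinal Hm = i1) //; apply: val_inj.
- by rewrite (_ : Ordinal Hm = i2) //; apply: val_inj.
- by rewrite (_ : Ordinal Hm = i3) //; apply: val_inj.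
Qed.

Lemma sdotE x y : sdot x y = x ord0 i1 * y ord0 i1 + x ord0 i2 * y ord0 i2 + x ord0 i3 * y ord0 i3.
Proof. by rewrite /sdot sum4'. Qed.

Lemma minkE x y : mink x y = - (x ord0 ord0 * y ord0 ord0) + x ord0 i1 * y ord0 i1 + x ord0 i2 * y ord0 i2 + x ord0 i3 * y ord0 i3.
Proof. rewrite /mink sum4 /Defs.eta /=; ring. Qed.
Lemma dotE x y : (x *m y^T) ord0 ord0 = x ord0 ord0 * y ord0 ord0 + x ord0 i1 * y ord0 i1 + x ord0 i2 * y ord0 i2 + x ord0 i3 * y ord0 i3.
Proof. by rewrite mxE sum4 !mxE. Qed.

Lemma eta2 i : eta i * eta i = 1.
Proof. by rewrite /Defs.eta; case: (i == ord0); rewrite ?mulrNN mulr1. Qed.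

Lemma mul_lowerT x y : x *m (lower y)^T = (mink y x)%:M.
Proof.
apply/matrixP => i j; rewrite !ord1 !mxE eqxx mulr1n /mink.
by apply: eq_bigr => l _; rewrite !mxE; ring.
Qed.

Lemma tensorT_sym u d : (tensorT u d)^T = tensorT u d.
Proof. by rewrite /tensorT linearD /= linearZ /= !trmx_mul !trmxK. Qed.

Lemma contr_tensor k u d : mink u k = 0 -> mink d k = 0 -> contr k (tensorT u d) = 0.
Proof.
move=> hu hd; rewrite /contr /tensorT mulmxDr -scalemxAr !mulmxA !mul_lowerT hu hd.
by rewrite !mul_scalar_mx !scale0r scaler0 addr0.
Qed.

Lemma lowerK x : lower (lower x) = x.
Proof. by apply/rowP => i; rewrite !mxE mulrA eta2 mul1r. Qed.

Lemma span0 S : in_span S 0.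
Proof. by exists 0%N, (fun _ => 0), (fun _ => 0); split => [[]//|]; rewrite big_ord0. Qed.

Lemma spanS S A : S A -> in_span S A.
Proof.
move=> HA; exists 1%N, (fun _ => 1), (fun _ => A); split => //.
by rewrite big_ord1 scale1r.
Qed.

Lemma spanD S A B : in_span S A -> in_span S B -> in_span S (A + B).
Proof.
move=> [n [c [F [HF ->]]]] [m [d [G [HG ->]]]].
exists (n + m)%N, (fun i => match split i with inl j => c j | inr j => d j end),
  (fun i => match split i with inl j => F j | inr j => G j end); split.
  by move=> i; case: (split i).
rewrite big_split_ord /=; congr (_ + _); apply: eq_bigr => i _.
  by rewrite -[lshift _ _]/(unsplit (inl i)) unsplitK.
by rewrite -[rshift _ _]/(unsplit (inr i)) unsplitK.
Qed.

Lemma spanZ S a A : in_span S A -> in_span S (a *: A).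
Proof.
move=> [n [c [F [HF ->]]]]; exists n, (fun i => a * c i), F; split => //.
by rewrite scaler_sumr; apply: eq_bigr => i _; rewrite scalerA.
Qed.

Lemma spanB S A B : in_span S A -> in_span S B -> in_span S (A - B).
Proof. by move=> hA hB; apply: spanD => //; rewrite -scaleN1r; apply: spanZ. Qed.

Lemma span_sum S (I : Type) (r : seq I) (P : pred I) (F : I -> 'M[R]_4) :
  (forall i, P i -> in_span S (F i)) -> in_span S (\sum_(i <- r | P i) F i).
Proof. by move=> h; apply: big_ind => //; [apply: span0 | apply: spanD]. Qed.

Lemma exists_perp (a b : 'rV[R]_4) : exists d : 'rV[R]_4,
  [/\ d ord0 ord0 = 0, sdot d d = 1, sdot d a = 0 & sdot d b = 0].
Proof.
pose M := col_mx (col_mx a b) (delta_mx ord0 ord0 : 'rV[R]_4).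
have hK : kermx M^T != 0.
  rewrite kermx_eq0 /row_free; apply/negP => /eqP h.
  by have := rank_leq_col M^T; rewrite h.
have [x [hx hxM]] : exists x : 'rV[R]_4, x != 0 /\ x *m M^T = 0.
  have [i hi] : exists i, row i (kermx M^T) != 0.
    apply/existsP; rewrite -negb_forall; apply: contra hK => /forallP h.
    apply/eqP/row_matrixP => i; rewrite row0; exact/eqP/h.
  by exists (row i (kermx M^T)); split => //; rewrite -row_mul mulmx_ker row0.
move: hxM; rewrite /M !tr_col_mx !mul_mx_row => /eqP.
rewrite !row_mx_eq0 => /andP[/andP[/eqP ha /eqP hb] /eqP h0].
have x0 : x ord0 ord0 = 0.
  by move/matrixP: h0 => /(_ ord0 ord0); rewrite dotE !mxE /= !mulr1 !mulr0 !addr0 => ->.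
have hpos : 0 < sdot x x.
  rewrite sdotE lt0r; apply/andP; split; last by rewrite !addr_ge0 // -expr2 sqr_ge0.
  apply/negP => /eqP h; move/negP: hx; apply; apply/eqP; rewrite -!expr2 in h.
  apply: rowv4; rewrite ?mxE //; nra.
pose s := Num.sqrt (sdot x x).
have hs : 0 < s by rewrite sqrtr_gt0.
have hs2 : s ^+ 2 = sdot x x by rewrite sqr_sqrtr // ltW.
exists (s^-1 *: x); split.
- by rewrite mxE x0 mulr0.
- rewrite sdotE in hs2; rewrite sdotE !mxE.
  have -> : s^-1 * x ord0 i1 * (s^-1 * x ord0 i1) + s^-1 * x ord0 i2 * (s^-1 * x ord0 i2) +
    s^-1 * x ord0 i3 * (s^-1 * x ord0 i3) = s^-1 ^+ 2 * (s ^+ 2) by rewrite hs2; ring.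
  by rewrite -exprMn mulVf ?expr1n // lt0r_neq0.
- move/matrixP: ha => /(_ ord0 ord0); rewrite dotE !mxE x0 mul0r add0r => ha.
  by rewrite sdotE !mxE -!mulrA -!mulrDr ha mulr0.
- move/matrixP: hb => /(_ ord0 ord0); rewrite dotE !mxE x0 mul0r add0r => hb.
  by rewrite sdotE !mxE -!mulrA -!mulrDr hb mulr0.
Qed.

End S0.

Section S1.
Variable R : rcfType.
Implicit Types (x y u d k p q : 'rV[R]_4) (S : 'M[R]_4 -> Prop) (A B : 'M[R]_4).

Lemma sdotC x y : sdot x y = sdot y x.
Proof. by rewrite !sdotE; ring. Qed.
Lemma sdotDl x y z : sdot (x + y) z = sdot x z + sdot y z.
Proof. by rewrite !sdotE !mxE; ring. Qed.
Lemma sdotZl (a : R) x z : sdot (a *: x) z = a * sdot x z.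
Proof. by rewrite !sdotE !mxE; ring. Qed.
Lemma sdotDr x y z : sdot z (x + y) = sdot z x + sdot z y.
Proof. by rewrite !sdotE !mxE; ring. Qed.
Lemma sdotZr (a : R) x z : sdot z (a *: x) = a * sdot z x.
Proof. by rewrite !sdotE !mxE; ring. Qed.
Lemma minkS x y : mink x y = - (x ord0 ord0 * y ord0 ord0) + sdot x y.
Proof. by rewrite minkE sdotE; ring. Qed.

Lemma sdot_pos q : q ord0 ord0 = 0 -> q != 0 -> 0 < sdot q q.
Proof.
move=> x0 hx.
rewrite sdotE lt0r; apply/andP; split; last by rewrite !addr_ge0 // -expr2 sqr_ge0.
apply/negP => /eqP h; move/negP: hx; apply; apply/eqP; rewrite -!expr2 in h.
apply: rowv4; rewrite ?mxE //; nra.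
Qed.

Definition sq x : 'M[R]_4 := (lower x)^T *m lower x.
Definition sy x y : 'M[R]_4 := (lower x)^T *m lower y + (lower y)^T *m lower x.

Lemma sqD x y (c : R) : sq (x + c *: y) = sq x + c *: sy x y + c ^+ 2 *: sq y.
Proof.
apply/matrixP => i j; rewrite /sq /sy !mxE !big_ord1 !mxE; ring.
Qed.

Lemma syC x y : sy x y = sy y x.
Proof. by rewrite /sy addrC. Qed.

Lemma tensorTE u d : tensorT u d = sq u + mink u u *: sq d.
Proof. by []. Qed.

Lemma sqZ (c : R) x : sq (c *: x) = c ^+ 2 *: sq x.
Proof. by apply/matrixP => i j; rewrite /sq !mxE !big_ord1 !mxE; ring. Qed.

Lemma inSk_of k u d : u ord0 ord0 = 1 -> sdot u u <= 1 -> d ord0 ord0 = 0 ->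
  sdot d d = 1 -> sdot d u = 0 -> mink u k = 0 -> sdot d k = 0 -> inSk k (tensorT u d).
Proof.
move=> h1 h2 h3 h4 h5 h6 h7; exists u, d; split; split => //.
by rewrite minkS h3 mul0r oppr0 add0r.
Qed.

Lemma null_in k u : u ord0 ord0 = 1 -> sdot u u = 1 -> mink u k = 0 -> inSk k (sq u).
Proof.
move=> h1 h2 h3; have [d [d0 dd du dk]] := exists_perp u k.
have -> : sq u = tensorT u d.
  by rewrite tensorTE minkS h1 h2 mul1r addNr scale0r addr0.
by apply: inSk_of => //; rewrite h2.
Qed.
End S1.

Section S2.
Variable R : rcfType.

Lemma expand (A T : 'M[R]_4) :
  A^T *m T *m A = \sum_i \sum_j T i j *: ((row i A)^T *m row j A).
Proof.
apply/matrixP => i' j'; rewrite !mxE summxE.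
under eq_bigr do rewrite !mxE big_distrl /=.
rewrite exchange_big /=; apply: eq_bigr => m _; rewrite summxE.
by apply: eq_bigr => l _; rewrite !mxE big_ord1 !mxE; ring.
Qed.

Lemma symmetrize (T : 'M[R]_4) (X : 'I_4 -> 'I_4 -> 'M[R]_4) : T^T = T ->
  \sum_i \sum_j T i j *: X i j = 2^-1 *: \sum_i \sum_j T i j *: (X i j + X j i).
Proof.
move=> hT.
have E : \sum_i \sum_j T i j *: X j i = \sum_i \sum_j T i j *: X i j.
  rewrite exchange_big /=; apply: eq_bigr => i _; apply: eq_bigr => j _.
  by rewrite -[in LHS]hT mxE.
have -> : \sum_i \sum_j T i j *: (X i j + X j i) =
   \sum_i \sum_j T i j *: X i j + \sum_i \sum_j T i j *: X j i.
  rewrite -big_split /=; apply: eq_bigr => i _.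
  by rewrite -big_split /=; apply: eq_bigr => j _; rewrite scalerDr.
rewrite E.
by rewrite -mulr2n -scaler_nat scalerA mulVf ?scale1r // pnatr_eq0.
Qed.
End S2.

Section S3.
Variable R : rcfType.
Implicit Types (x y u d p q : 'rV[R]_4) (S : 'M[R]_4 -> Prop) (A B : 'M[R]_4).
Variable k : 'rV[R]_4.
Hypothesis hsp : 0 < mink k k.

Let k0 := k ord0 ord0.
Let K2 := sdot k k.
Lemma K2_gt0 : 0 < K2.
Proof.
move: hsp; rewrite minkS -/k0 -/K2 => h.
have : 0 <= k0 * k0 by rewrite -expr2 sqr_ge0.
lra.
Qed.
Let K2n0 : K2 != 0. Proof. exact: lt0r_neq0 K2_gt0. Qed.

Definition ww : 'rV[R]_4 := \row_i (if i == ord0 then 1 else k0 / K2 * k ord0 i).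
Lemma ww0 : ww ord0 ord0 = 1. Proof. by rewrite mxE eqxx. Qed.
Lemma entDZ x y (c : R) i : (x + c *: y) ord0 i = x ord0 i + c * y ord0 i.
Proof. by rewrite !mxE. Qed.
Lemma entZ x (c : R) i : (c *: x) ord0 i = c * x ord0 i.
Proof. by rewrite !mxE. Qed.
Lemma sdot_ww x : sdot ww x = k0 / K2 * sdot k x.
Proof. by rewrite !sdotE !mxE /=; ring. Qed.
Lemma mink_wk : mink ww k = 0.
Proof. by rewrite minkS ww0 sdot_ww -/K2 mulfVK // mul1r addNr. Qed.
Let rho2 := 1 - k0 ^+ 2 / K2.
Lemma rho2_gt0 : 0 < rho2.
Proof.
move: hsp; rewrite minkS -/k0 -/K2 => h.
rewrite /rho2 subr_gt0 ltr_pdivrMr ?K2_gt0 // mul1r; lra.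
Qed.
Lemma sdot_ww_ww : sdot ww ww = k0 ^+ 2 / K2.
Proof. by rewrite sdot_ww sdotC sdot_ww -/K2; field. Qed.
Lemma mink_ww : mink ww ww = - rho2.
Proof. by rewrite minkS sdot_ww_ww ww0 /rho2; ring. Qed.

Local Notation V := (in_span (inSk k)).

Lemma lemB q : q ord0 ord0 = 0 -> sdot q k = 0 -> 0 < sdot q q ->
  [/\ V (sq q), V (sy ww q) & V (sq ww)].
Proof.
move=> q0 qk qpos.
set N := sdot q q.
have qw : sdot q ww = 0 by rewrite sdotC sdot_ww sdotC qk mulr0.
pose lam := Num.sqrt (rho2 / N).
have hlam : 0 < lam by rewrite sqrtr_gt0 divr_gt0 // rho2_gt0.
have hlam2 : lam ^+ 2 = rho2 / N by rewrite sqr_sqrtr // ltW // divr_gt0 // rho2_gt0.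
pose mu := (Num.sqrt N)^-1.
have hmu2 : mu ^+ 2 = N^-1 by rewrite exprVn sqr_sqrtr // ltW.
have hnull : forall c : R, c ^+ 2 = lam ^+ 2 -> V (sq (ww + c *: q)).
  move=> c hc; apply: spanS; apply: null_in.
  - by rewrite entDZ ww0 q0 mulr0 addr0.
  - rewrite !(sdotDl, sdotDr, sdotZl, sdotZr) sdot_ww_ww qw (sdotC ww q) qw -/N.
    rewrite !mulr0 !addr0 add0r mulrA -expr2 hc hlam2 /rho2; field.
    by rewrite lt0r_neq0.
  - by rewrite minkS entDZ ww0 q0 mulr0 addr0 mul1r sdotDl sdotZl qk mulr0 addr0
      sdot_ww -/K2 mulfVK // addNr.
have hT : V (sq ww - (rho2 / N) *: sq q).
  have -> : sq ww - (rho2 / N) *: sq q = tensorT ww (mu *: q).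
    by rewrite tensorTE mink_ww sqZ hmu2 scalerA mulNr scaleNr.
  apply: spanS; apply: inSk_of.
  - exact: ww0.
  - by rewrite sdot_ww_ww; move: rho2_gt0; rewrite /rho2; lra.
  - by rewrite entZ q0 mulr0.
  - by rewrite sdotZl sdotZr -/N mulrA -expr2 hmu2 mulVf // lt0r_neq0.
  - by rewrite sdotZl qw mulr0.
  - exact: mink_wk.
  - by rewrite sdotZl qk mulr0.
have hp := hnull lam erefl.
have hm := hnull (- lam) (sqrrN lam).
rewrite !sqD sqrrN hlam2 in hp hm.
have he : rho2 / N != 0 by rewrite lt0r_neq0 // divr_gt0 // rho2_gt0.
have hl : lam != 0 by rewrite lt0r_neq0.
set P := sq ww + lam *: sy ww q + rho2 / N *: sq q in hp.
set M := sq ww + - lam *: sy ww q + rho2 / N *: sq q in hm.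
set T := sq ww - rho2 / N *: sq q in hT.
have HZ : sq q = (4 * (rho2 / N))^-1 *: (P + M - (T + T)).
  rewrite /P /M /T; move: (sq ww) (sy ww q) (sq q) => X Y Z.
  apply/matrixP => i j; rewrite !mxE; field; by rewrite !lt0r_neq0 // rho2_gt0.
have HY : sy ww q = (2 * lam)^-1 *: (P - M).
  rewrite /P /M; move: (sq ww) (sy ww q) (sq q) => X Y Z.
  by apply/matrixP => i j; rewrite !mxE; field; rewrite hl lt0r_neq0.
have HX : sq ww = T + (rho2 / N) *: sq q.
  by rewrite /T subrK.
have VZ : V (sq q) by rewrite HZ; apply/spanZ/spanB; [apply: spanD | apply: spanD].
split => //; first by rewrite HY; apply/spanZ/spanB.
by rewrite HX; apply: spanD => //; apply: spanZ.
Qed.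

Lemma V_sqww : V (sq ww).
Proof.
have [d [d0 dd _ dk]] := exists_perp k k.
have hpos : 0 < sdot d d by rewrite dd ltr01.
by have [] := lemB d0 dk hpos.
Qed.

Lemma lemA p : mink p k = 0 -> V (sq p).
Proof.
move=> hp.
pose q := p + (- p ord0 ord0) *: ww.
have ep : p = q + p ord0 ord0 *: ww by rewrite /q scaleNr addrNK.
have q0 : q ord0 ord0 = 0 by rewrite entDZ ww0 mulr1 addrN.
have qk : sdot q k = 0.
  rewrite sdotDl sdotZl sdot_ww -/K2 mulfVK //; move: hp; rewrite minkS -/k0.
  by rewrite mulNr => h; rewrite mulrC; lra.
rewrite ep sqD.
have [->|qn0] := eqVneq q 0.
  have l0 : lower (0 : 'rV[R]_4) = 0 by apply/rowP => i; rewrite !mxE mulr0.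
  rewrite /sq /sy l0 trmx0 !mul0mx !mulmx0 !addr0 scaler0 add0r.
  by rewrite add0r; apply: spanZ; apply: V_sqww.
have [h1 h2 h3] := lemB q0 qk (sdot_pos q0 qn0).
by rewrite syC; apply: spanD; [apply: spanD => //|]; apply: spanZ.
Qed.

Lemma lemC T : T^T = T -> contr k T = 0 -> V T.
Proof.
move=> hT hk'; rewrite /contr in hk'.
have hTk : T *m k^T = 0 by rewrite -{1}hT -trmx_mul hk' trmx0.
pose c := (mink k k)^-1.
pose Qm := 1%:M - c *: (k^T *m lower k).
have eQ : Qm^T *m T *m Qm = T.
  rewrite /Qm [(_ - _)^T]linearB /= trmx1 [(_ *: _)^T]linearZ /= trmx_mul trmxK.
  rewrite mulmxBl mul1mx -scalemxAl -mulmxA hk' mulmx0 scaler0 subr0.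
  by rewrite mulmxBr mulmx1 -scalemxAr mulmxA hTk mul0mx scaler0 subr0.
have lkk : lower k *m k^T = (mink k k)%:M.
  by rewrite -(trmxK (lower k *m k^T)) trmx_mul trmxK mul_lowerT tr_scalar_mx.
have hrow : forall i, row i Qm *m k^T = 0.
  move=> i; rewrite -row_mul /Qm mulmxBl mul1mx -scalemxAl -mulmxA lkk mul_mx_scalar.
  by rewrite scalerA mulVf ?scale1r ?subrr ?row0 // lt0r_neq0.
have hf : forall f : 'rV[R]_4, f *m k^T = 0 -> V (f^T *m f).
  move=> f hf.
  have hm : mink (lower f) k = 0.
    have kf : k *m f^T = 0 by rewrite -[k *m f^T]trmxK trmx_mul trmxK hf trmx0.
    have := mul_lowerT k (lower f); rewrite lowerK kf.
    by move/matrixP => /(_ ord0 ord0); rewrite !mxE eqxx mulr1n => <-.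
  by have := lemA hm; rewrite /sq lowerK.
have pol : forall f g : 'rV[R]_4,
    f^T *m g + g^T *m f = (f + g)^T *m (f + g) - f^T *m f - g^T *m g.
  by move=> f g; apply/matrixP => a b; rewrite !mxE !big_ord1 !mxE; ring.
rewrite -eQ expand symmetrize //; apply: spanZ.
apply: span_sum => i _; apply: span_sum => j _; apply: spanZ.
rewrite pol; apply: spanB; [apply: spanB|]; apply: hf => //.
by rewrite mulmxDl !hrow addr0.
Qed.
End S3.

Section S4.
Variable R : rcfType.
Implicit Types (x y u d k p q : 'rV[R]_4) (S : 'M[R]_4 -> Prop) (A B : 'M[R]_4).

Lemma span_closed S (P : 'M[R]_4 -> Prop) : P 0 -> (forall A B, P A -> P B -> P (A + B)) ->
  (forall a A, P A -> P (a *: A)) -> (forall A, S A -> P A) -> forall A, in_span S A -> P A.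
Proof.
move=> h0 hD hZ hS A [n [c [F [HF ->]]]].
by apply: big_ind => // i _; apply: hZ; apply: hS.
Qed.

Lemma timelike_empty k u : u ord0 ord0 = 1 -> sdot u u <= 1 -> mink u k = 0 -> mink k k < 0 -> False.
Proof.
rewrite !minkE sdotE => -> h2 h1 h3.
set k0 := k ord0 ord0 in h1 h3 *.
set k1 := k ord0 i1 in h1 h3 *; set k2 := k ord0 i2 in h1 h3 *; set k3 := k ord0 i3 in h1 h3 *.
set u1 := u ord0 i1 in h1 h2 *; set u2 := u ord0 i2 in h1 h2 *; set u3 := u ord0 i3 in h1 h2 *.
have h4 : 0 <= (k1 - k0*u1)^+2 + (k2 - k0*u2)^+2 + (k3 - k0*u3)^+2.
  by rewrite !addr_ge0 ?sqr_ge0.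
have h5 : 0 <= k0^+2 by rewrite sqr_ge0.
rewrite -!expr2 in h2 h3; nra.
Qed.

Lemma null_k0 k : k != 0 -> mink k k = 0 -> k ord0 ord0 != 0.
Proof.
move=> hk hkk; apply/negP => /eqP k0.
have := sdot_pos k0 hk; rewrite minkS k0 mul0r oppr0 add0r in hkk.
by rewrite hkk ltxx.
Qed.

Lemma null_u k u : k ord0 ord0 != 0 -> mink k k = 0 -> u ord0 ord0 = 1 -> sdot u u <= 1 ->
  mink u k = 0 -> u = (k ord0 ord0)^-1 *: k.
Proof.
move=> hk0; rewrite !minkE sdotE => hkk u0 huu; rewrite u0 mul1r => huk.
set k0 := k ord0 ord0 in hk0 hkk huk *.
set k1 := k ord0 i1 in hkk huk *; set k2 := k ord0 i2 in hkk huk *; set k3 := k ord0 i3 in hkk huk *.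
set u1 := u ord0 i1 in huu huk *; set u2 := u ord0 i2 in huu huk *; set u3 := u ord0 i3 in huu huk *.
have h5 : 0 <= k0^+2 by rewrite sqr_ge0.
have e1 : 0 <= (k1 - k0*u1)^+2 by rewrite sqr_ge0.
have e2 : 0 <= (k2 - k0*u2)^+2 by rewrite sqr_ge0.
have e3 : 0 <= (k3 - k0*u3)^+2 by rewrite sqr_ge0.
have hs : (k1 - k0*u1)^+2 + (k2 - k0*u2)^+2 + (k3 - k0*u3)^+2 =
   (- (k0 * k0) + k1 * k1 + k2 * k2 + k3 * k3) - 2 * k0 * (- k0 + u1 * k1 + u2 * k2 + u3 * k3)
   + k0 ^+ 2 * (u1 * u1 + u2 * u2 + u3 * u3 - 1) by ring.
rewrite hkk huk mulr0 subr0 add0r in hs.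
have hle : k0 ^+ 2 * (u1 * u1 + u2 * u2 + u3 * u3 - 1) <= 0.
  by rewrite mulr_ge0_le0 // subr_le0.
have z1 : (k1 - k0*u1)^+2 = 0 by lra.
have z2 : (k2 - k0*u2)^+2 = 0 by lra.
have z3 : (k3 - k0*u3)^+2 = 0 by lra.
move: z1 z2 z3 => /eqP; rewrite sqrf_eq0 subr_eq0 => /eqP z1 /eqP; rewrite sqrf_eq0 subr_eq0 => /eqP z2 /eqP; rewrite sqrf_eq0 subr_eq0 => /eqP z3.
apply: rowv4; rewrite !mxE -/k0 ?u0 ?mulVf // -/k1 -/k2 -/k3 -/u1 -/u2 -/u3.
- by rewrite z1 mulrA mulVf // mul1r.
- by rewrite z2 mulrA mulVf // mul1r.
- by rewrite z3 mulrA mulVf // mul1r.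
Qed.


Lemma minkZl (c : R) x y : mink (c *: x) y = c * mink x y.
Proof. by rewrite !minkE !mxE; ring. Qed.
Lemma minkZr (c : R) x y : mink x (c *: y) = c * mink x y.
Proof. by rewrite !minkE !mxE; ring. Qed.
Lemma mink_lower x : mink (lower x) (lower x) = mink x x.
Proof. by rewrite !minkE !mxE /Defs.eta /=; ring. Qed.
End S4.

Theorem mainTheorem11 (R : rcfType) (k : 'rV[R]_4) (hk : k != 0) :
  [/\ (forall T, inSk k T -> contr k T = 0),
      (timelike k -> forall T, ~ inSk k T),
      (spacelike k -> forall T : 'M[R]_4,
          in_span (inSk k) T <-> (T^T = T /\ contr k T = 0)) &
      (null k ->
         (forall T : 'M[R]_4,
            in_span (inSk k) T <-> exists a : R, T = a *: ((lower k)^T *m lower k))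
         /\ (forall (l : 'rV[R]_4) (T : 'M[R]_4), null l -> in_span (inSk k) T ->
               mink (contr l T) (contr l T) <= 0))].
Proof.
split.
- by move=> T [u [d [[u0 uu d0 dd du] [uk dk ->]]]]; apply: contr_tensor.
- move=> hkt T [u [d [[u0 uu _ _ _] [uk _ _]]]]; exact: timelike_empty u0 uu uk hkt.
- move=> hsp T; split; last by move=> [hT hc]; apply: (@lemC R k hsp T hT hc).
  apply: (span_closed (P := fun A => A^T = A /\ contr k A = 0)).
  + by rewrite trmx0 /contr mulmx0.
  + move=> A B [hA cA] [hB cB]; rewrite /contr in cA cB *; split.
      by rewrite linearD /= hA hB.
    by rewrite mulmxDr cA cB addr0.
  + move=> a A [hA cA]; rewrite /contr in cA *; split.
      by rewrite linearZ /= hA.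
    by rewrite -scalemxAr cA scaler0.
  + move=> A [u [d [[u0 uu d0 dd du] [uk dk ->]]]]; split.
      exact: tensorT_sym.
    exact: contr_tensor.
- move=> [_ hkk]; have hk0 := null_k0 hk hkk.
  set k0 := k ord0 ord0 in hk0.
  have muu : mink (k0^-1 *: k) (k0^-1 *: k) = 0 by rewrite minkZl minkZr hkk !mulr0.
  have Hfw : forall T, in_span (inSk k) T -> exists a, T = a *: ((lower k)^T *m lower k).
    apply: span_closed.
    + by exists 0; rewrite scale0r.
    + by move=> A B [a ->] [b ->]; exists (a + b); rewrite scalerDl.
    + by move=> c A [a ->]; exists (c * a); rewrite scalerA.
    + move=> A [u [d [[u0 uu d0 dd du] [uk dk ->]]]].
      have eu := null_u hk0 hkk u0 uu uk.
      exists (k0^-1 ^+ 2); rewrite tensorTE eu muu scale0r addr0 sqZ.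
      by [].
  split.
  + move=> T; split; first exact: Hfw.
    move=> [a ->].
    set u := k0^-1 *: k.
    have [d [d0 dd du dk]] := exists_perp u k.
    have uu : sdot u u = 1.
      move: hkk; rewrite minkS -/k0 sdotZl sdotZr => hkk.
      have -> : sdot k k = k0 * k0 by lra.
      by field.
    have uk : mink u k = 0 by rewrite minkZl hkk mulr0.
    have hin : inSk k (tensorT u d).
      apply: inSk_of => //; last by rewrite uu.
      by rewrite mxE -/k0 mulVf.
    have -> : a *: ((lower k)^T *m lower k) = (a * k0^+2) *: tensorT u d.
      rewrite tensorTE muu scale0r addr0 /u sqZ scalerA /sq; congr (_ *: _).
      by field.
    by apply: spanZ; apply: spanS.
  + move=> l T [_ hll] /Hfw [a ->].
    rewrite /contr -scalemxAr mulmxA mul_lowerT mul_scalar_mx scalerA.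
    by rewrite minkZl minkZr mink_lower hkk !mulr0.
Qed.
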